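(* Let $K$ be a differential field of characteristic $0$ and let $M$ be a differential module over $K$ of dimension $6$. The following are equivalent: (1) $M\cong \Lambda^2N$ for some differential module $N$ of dimension $4$ with $\det N=\mathbf{1}$. (2) There exists $F\in \mathrm{sym}^2M$ with $\partial F=0$ such that $F$ is non degenerate and has a totally isotropic subspace of dimension $3$.
   Context: A differential module over $K$ is a finite-dimensional $K$-vector space with an additive map $\partial$ satisfying the Leibniz rule; $\mathrm{sym}^2M$ and $\Lambda^2N$ carry the induced derivations, $\det N=\Lambda^{\dim N}N$, and $\mathbf{1}$ is the trivial one-dimensional module. An element $F\in\mathrm{sym}^2M$ defines a symmetric bilinear form $(a,b)=F(a\otimes b)$ on $M^*$; non degenerate and totally isotropic subspace refer to this form (equivalently, $F$ is a quadratic form in a basis of $M$). *)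

(* Defs.v *)
From HB Require Import structures.
From mathcomp Require Import all_boot all_order all_algebra.
Set Implicit Arguments. Unset Strict Implicit. Unset Printing Implicit Defensive.
Import Order.TTheory GRing.Theory Num.Theory.
Local Open Scope ring_scope.

Definition derivation (K : fieldType) (d : K -> K) : Prop :=
  (forall x y, d (x + y) = d x + d y) /\ (forall x y, d (x * y) = d x * y + x * d y).

(* A differential module of dimension n over (K,d), presented in a basis:
   the carrier is K^n (column vectors 'cV_n) and D is an additive map
   satisfying the Leibniz rule.  Every n-dimensional differential module is
   isomorphic to one of this form. *)
Definition dmod_der (K : fieldType) (d : K -> K) (n : nat)
    (D : 'cV[K]_n -> 'cV[K]_n) : Prop :=
  (forall u v, D (u + v) = D u + D v) /\
  (forall (a : K) u, D (a *: u) = d a *: u + a *: D u).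

Definition ebase {K : fieldType} (n : nat) (i : 'I_n) : 'cV[K]_n := delta_mx i 0.

(* Induced derivation on M (x) M, whose elements are n x n matrices
   T = \sum_ij T_ij e_i (x) e_j  (e_i (x) e_j <-> e_i e_j^T):
   d(T) = \sum_ij d(T_ij) e_i(x)e_j + T_ij (De_i (x) e_j + e_i (x) De_j). *)
Definition tensor_der (K : fieldType) (d : K -> K) (n : nat)
    (D : 'cV[K]_n -> 'cV[K]_n) (T : 'M[K]_n) : 'M[K]_n :=
  \sum_(i < n) \sum_(j < n)
     (d (T i j) *: (ebase i *m (ebase j)^T)
      + T i j *: (D (ebase i) *m (ebase j)^T + ebase i *m (D (ebase j))^T)).

(* sym^2 M (char 0) = symmetric tensors, Lambda^2 M = antisymmetric tensors,
   both as differential submodules of M (x) M with tensor_der. *)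
Definition is_sym2 (K : fieldType) (n : nat) (T : 'M[K]_n) : Prop := T^T = T.
Definition is_alt2 (K : fieldType) (n : nat) (T : 'M[K]_n) : Prop := T^T = - T.

(* Induced derivation on det N = Lambda^n N, which is 1-dimensional with basis
   w0 = e_1 /\ ... /\ e_n.  For c w0:
   d(c w0) = d(c) w0 + c \sum_k e_1/\../\De_k/\../\e_n, and
   e_1/\../\De_k/\../\e_n = det[e_1,..,De_k,..,e_n] w0.
   We return the coordinate of d(c w0) on w0. *)
Definition det_der (K : fieldType) (d : K -> K) (n : nat)
    (D : 'cV[K]_n -> 'cV[K]_n) (c : K) : K :=
  d c + c * \sum_(k < n)
     \det (\matrix_(i < n, j < n) (if j == k then D (ebase k) i 0
                                   else (1%:M : 'M[K]_n) i j)).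

(* det N = 1 : det N is isomorphic to the trivial module, i.e. has a nonzero
   horizontal element. *)
Definition det_trivial (K : fieldType) (d : K -> K) (n : nat)
    (D : 'cV[K]_n -> 'cV[K]_n) : Prop :=
  exists c : K, c != 0 /\ det_der d D c = 0.

Definition iso_to_Lambda2 (K : fieldType) (d : K -> K) (m n : nat)
    (DM : 'cV[K]_m -> 'cV[K]_m) (DN : 'cV[K]_n -> 'cV[K]_n) : Prop :=
  exists phi : 'cV[K]_m -> 'M[K]_n,
    (forall (a : K) u v, phi (a *: u + v) = a *: phi u + phi v) /\
    injective phi /\
    (forall u, is_alt2 (phi u)) /\
    (forall T, is_alt2 T -> exists u, phi u = T) /\
    (forall u, phi (DM u) = tensor_der d DN (phi u)).

(* The symmetric bilinear form on M^* (row vectors) defined by F in sym^2 M: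
   (a, b) = F(a (x) b) = a F b^T. *)
Definition sform (K : fieldType) (n : nat) (F : 'M[K]_n) (a b : 'rV[K]_n) : K :=
  (a *m F *m b^T) 0 0.

Definition nondeg_form (K : fieldType) (n : nat) (F : 'M[K]_n) : Prop :=
  forall a : 'rV[K]_n, (forall b, sform F a b = 0) -> a = 0.

Definition totally_isotropic (K : fieldType) (n : nat) (F : 'M[K]_n)
    (W : 'M[K]_n) : Prop :=
  forall a b : 'rV[K]_n, (a <= W)%MS -> (b <= W)%MS -> sform F a b = 0.

(* Main.v *)
Require Import Defs.
From mathcomp Require Import all_boot all_order all_algebra.
From mathcomp Require Import ring.
Set Implicit Arguments. Unset Strict Implicit. Unset Printing Implicit Defensive.
Import GRing.Theory.
Local Open Scope ring_scope.

Lemma der0 (K : fieldType) (d : K -> K) : derivation d -> d 0 = 0.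
Proof. case=> hA _; have h := hA 0 0; rewrite addr0 in h.
by apply: (addrI (d 0)); rewrite addr0 -h. Qed.

Lemma der1 (K : fieldType) (d : K -> K) : derivation d -> d 1 = 0.
Proof. case=> _ hM; have h := hM 1 1; rewrite !mulr1 !mul1r in h.
by apply: (addrI (d 1)); rewrite addr0 -h. Qed.

Lemma derN (K : fieldType) (d : K -> K) : derivation d -> forall x, d (- x) = - d x.
Proof. move=> hd x; have [hA _] := hd; have := hA x (- x).
rewrite subrr der0 // => /eqP; rewrite eq_sym addr_eq0 => /eqP ->; by rewrite opprK. Qed.

Lemma der_sum (K : fieldType) (d : K -> K) : derivation d ->
  forall (I : Type) (r : seq I) (P : pred I) (F : I -> K),
  d (\sum_(i <- r | P i) F i) = \sum_(i <- r | P i) d (F i).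
Proof. move=> hd I r P F; have [hA _] := hd.
by apply: (big_morph d hA (der0 hd)). Qed.

Lemma der_inv (K : fieldType) (d : K -> K) : derivation d ->
  forall c, c != 0 -> d (c^-1) = - c^-1 * c^-1 * d c.
Proof. move=> hd c hc; have [_ hM] := hd.
have h0 := hM c c^-1; rewrite mulfV // der1 // in h0.
have h : c * d c^-1 = - (d c / c).
  by apply/eqP; rewrite -subr_eq0 opprK; apply/eqP; rewrite addrC -h0.
have -> : d c^-1 = c^-1 * (c * d c^-1) by rewrite mulrA mulVf ?mul1r.
by rewrite h; field. Qed.

Notation dmx d A := (map_mx d A).

Lemma dmxD (K : fieldType) (d : K -> K) : derivation d ->
  forall m n (A B : 'M[K]_(m,n)), dmx d (A + B) = dmx d A + dmx d B.
Proof. by move=> [hA _] m n A B; apply/matrixP=> i j; rewrite !mxE hA. Qed.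

Lemma dmxN (K : fieldType) (d : K -> K) : derivation d ->
  forall m n (A : 'M[K]_(m,n)), dmx d (- A) = - dmx d A.
Proof. by move=> hd m n A; apply/matrixP=> i j; rewrite !mxE derN. Qed.

Lemma dmxM (K : fieldType) (d : K -> K) : derivation d ->
  forall m n p (A : 'M[K]_(m,n)) (B : 'M[K]_(n,p)),
  dmx d (A *m B) = dmx d A *m B + A *m dmx d B.
Proof. move=> hd m n p A B; have [_ hM] := hd; apply/matrixP=> i j.
rewrite !mxE der_sum // -big_split /=; apply: eq_bigr => k _.
by rewrite hM !mxE. Qed.

Lemma dmxZ (K : fieldType) (d : K -> K) : derivation d ->
  forall m n (a : K) (A : 'M[K]_(m,n)), dmx d (a *: A) = d a *: A + a *: dmx d A.
Proof. move=> hd m n a A; have [_ hM] := hd; apply/matrixP=> i j.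
by rewrite !mxE hM. Qed.

Lemma dmxT (K : fieldType) (d : K -> K) m n (A : 'M[K]_(m,n)) :
  dmx d (A^T) = (dmx d A)^T.
Proof. by apply/matrixP=> i j; rewrite !mxE. Qed.

Lemma dmx_delta (K : fieldType) (d : K -> K) : derivation d ->
  forall m n (i : 'I_m) (j : 'I_n), dmx d (delta_mx i j) = 0.
Proof. move=> hd m n i j; apply/matrixP=> a b; rewrite !mxE.
by case: (_ && _); rewrite /= ?der1 ?der0. Qed.

Definition Amat (K : fieldType) n (D : 'cV[K]_n -> 'cV[K]_n) : 'M[K]_n :=
  \matrix_(i, j) D (ebase j) i 0.

Lemma Amat_col (K : fieldType) n (D : 'cV[K]_n -> 'cV[K]_n) j :
  Amat D *m ebase j = D (ebase j).
Proof. apply/matrixP=> i k; rewrite !mxE (bigD1 j) //= big1 ?addr0.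
  by rewrite !mxE (ord1 k) !eqxx mulr1.
by move=> l hl; rewrite !mxE (negbTE hl) /= mulr0. Qed.

Lemma dmod_formula (K : fieldType) (d : K -> K) n (D : 'cV[K]_n -> 'cV[K]_n) :
  derivation d -> dmod_der d D -> forall v, D v = dmx d v + Amat D *m v.
Proof. move=> hd [hA hZ] v.
have D0 : D 0 = 0 by have h := hA 0 0; rewrite addr0 in h; apply: (addrI (D 0)); rewrite addr0 -h.
have Dsum : forall (r : seq 'I_n) (F : 'I_n -> 'cV[K]_n), D (\sum_(i <- r) F i) = \sum_(i <- r) D (F i).
  by move=> r F; apply: (big_morph D hA D0).
have hv : v = \sum_(k < n) v k 0 *: ebase k.
  apply/matrixP=> i j; rewrite summxE (bigD1 i) //= big1 ?addr0.
    by rewrite !mxE (ord1 j) !eqxx mulr1.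
  by move=> k hk; rewrite !mxE eq_sym (negbTE hk) mulr0.
rewrite {1}hv Dsum.
have -> : \sum_(k < n) D (v k 0 *: ebase k) = \sum_(k < n) (d (v k 0) *: ebase k + v k 0 *: (Amat D *m ebase k)).
  by apply: eq_bigr => k _; rewrite hZ Amat_col.
rewrite big_split /=; congr (_ + _).
  apply/matrixP=> i j; rewrite summxE (bigD1 i) //= big1 ?addr0.
    by rewrite !mxE (ord1 j) !eqxx mulr1.
  by move=> k hk; rewrite !mxE eq_sym (negbTE hk) mulr0.
by rewrite {2}hv mulmx_sumr; apply: eq_bigr => k _; rewrite scalemxAr.
Qed.

Lemma ebase_tr (K : fieldType) n (i j : 'I_n) :
  ebase i *m (ebase j)^T = delta_mx i j :> 'M[K]_n.
Proof. by rewrite /ebase trmx_delta mul_delta_mx. Qed.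

Lemma tensor_der_formula (K : fieldType) (d : K -> K) n (D : 'cV[K]_n -> 'cV[K]_n) :
  derivation d -> dmod_der d D -> forall T : 'M[K]_n,
  tensor_der d D T = dmx d T + Amat D *m T + T *m (Amat D)^T.
Proof. move=> hd hD T.
have hDe : forall i, D (ebase i) = Amat D *m ebase i.
  by move=> i; rewrite (dmod_formula hd hD) /ebase dmx_delta // add0r.
rewrite /tensor_der.
have -> : \sum_(i < n) \sum_(j < n) (d (T i j) *: (ebase i *m (ebase j)^T) +
    T i j *: (D (ebase i) *m (ebase j)^T + ebase i *m (D (ebase j))^T)) =
  \sum_(i < n) \sum_(j < n) (d (T i j) *: delta_mx i j) +
  (Amat D *m (\sum_(i < n) \sum_(j < n) (T i j *: delta_mx i j)) +
   (\sum_(i < n) \sum_(j < n) (T i j *: delta_mx i j)) *m (Amat D)^T).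
  rewrite mulmx_sumr mulmx_suml -!big_split /=; apply: eq_bigr => i _.
  rewrite mulmx_sumr mulmx_suml -!big_split /=; apply: eq_bigr => j _.
  rewrite !hDe ebase_tr trmx_mul -mulmxA ebase_tr mulmxA ebase_tr.
  by rewrite -scalemxAr -scalemxAl scalerDr addrA.
rewrite -matrix_sum_delta addrA; congr (_ + _ + _).
rewrite [RHS]matrix_sum_delta; apply: eq_bigr => i _; apply: eq_bigr => j _.
by rewrite mxE.
Qed.


Definition nf (K : Type) m n (A : 'M[K]_(m.+1, n.+1)) (i j : nat) : K :=
  A (inord i) (inord j).
Arguments nf : simpl never.

Lemma nfE (K : Type) m n (A : 'M[K]_(m.+1, n.+1)) i j : A i j = nf A i j.
Proof. by rewrite /nf !inord_val. Qed.


Definition Xf {K : fieldType} (v : 'cV[K]_6) (i j : nat) : K :=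
  match i, j with
  | 0, 1 => nf v 0%N 0%N | 1, 0 => - nf v 0%N 0%N
  | 0, 2 => nf v 1%N 0%N | 2, 0 => - nf v 1%N 0%N
  | 0, 3 => nf v 2%N 0%N | 3, 0 => - nf v 2%N 0%N
  | 2, 3 => nf v 3%N 0%N | 3, 2 => - nf v 3%N 0%N
  | 1, 3 => - nf v 4%N 0%N | 3, 1 => nf v 4%N 0%N
  | 1, 2 => nf v 5%N 0%N | 2, 1 => - nf v 5%N 0%N
  | _, _ => 0 end.
Definition Xmx {K : fieldType} (v : 'cV[K]_6) : 'M[K]_4 := \matrix_(i, j) Xf v i j.

Definition xi {K : fieldType} (T : 'M[K]_4) : 'cV[K]_6 :=
  \col_(i < 6) match (i : nat) with
  | 0 => nf T 0%N 1%N | 1 => nf T 0%N 2%N | 2 => nf T 0%N 3%N | 3 => nf T 2%N 3%N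
  | 4 => - nf T 1%N 3%N | _ => nf T 1%N 2%N end.

Definition Jmx {K : fieldType} : 'M[K]_6 :=
  \matrix_(i, j) if ((i : nat) + 3 == j)%N || ((j : nat) + 3 == i)%N then 1 else 0.

Definition Lf {K : fieldType} (B : 'M[K]_4) (i j : nat) : K :=
  let b := nf B in
  match i, j with
  | 0,0 => b 0%N 0%N + b 1%N 1%N | 0,1 => b 1%N 2%N | 0,2 => b 1%N 3%N | 0,3 => 0 | 0,4 => b 0%N 3%N | 0,_ => - b 0%N 2%N
  | 1,0 => b 2%N 1%N | 1,1 => b 0%N 0%N + b 2%N 2%N | 1,2 => b 2%N 3%N | 1,3 => - b 0%N 3%N | 1,4 => 0 | 1,_ => b 0%N 1%N
  | 2,0 => b 3%N 1%N | 2,1 => b 3%N 2%N | 2,2 => b 0%N 0%N + b 3%N 3%N | 2,3 => b 0%N 2%N | 2,4 => - b 0%N 1%N | 2,_ => 0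
  | 3,0 => 0 | 3,1 => - b 3%N 0%N | 3,2 => b 2%N 0%N | 3,3 => b 2%N 2%N + b 3%N 3%N | 3,4 => - b 2%N 1%N | 3,_ => - b 3%N 1%N
  | 4,0 => b 3%N 0%N | 4,1 => 0 | 4,2 => - b 1%N 0%N | 4,3 => - b 1%N 2%N | 4,4 => b 1%N 1%N + b 3%N 3%N | 4,_ => - b 3%N 2%N
  | _,0 => - b 2%N 0%N | _,1 => b 1%N 0%N | _,2 => 0 | _,3 => - b 1%N 3%N | _,4 => - b 2%N 3%N | _,_ => b 1%N 1%N + b 2%N 2%N
  end.
Definition Lmap {K : fieldType} (B : 'M[K]_4) : 'M[K]_6 := \matrix_(i, j) Lf B i j.


Ltac cas4 i := case: i => [[|[|[|[|?]]]] ?] //.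
Ltac cas6 i := case: i => [[|[|[|[|[|[|?]]]]]] ?] //.

Ltac ent := rewrite /= /nf ?(mxE, big_ord_recl, big_ord0) ?inordK //= ?nfE /= ?inordK //= /bump /= ?addn0 ?add1n.

Lemma XL {K : fieldType} (B : 'M[K]_4) (v : 'cV[K]_6) :
  Xmx (Lmap B *m v) = B *m Xmx v + Xmx v *m B^T.
Proof.
apply/matrixP => i j; rewrite !mxE.
cas4 i; cas4 j; ent.
all: ring.
Qed.

Lemma LJ {K : fieldType} (B : 'M[K]_4) :
  (Lmap B)^T *m Jmx + Jmx *m Lmap B = \tr B *: Jmx.
Proof.
apply/matrixP => i j; rewrite !mxE /mxtrace.
cas6 i; cas6 j; ent.
all: ring.
Qed.

Lemma JJ {K : fieldType} : (Jmx : 'M[K]_6) *m Jmx = 1%:M.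
Proof. apply/matrixP => i j; rewrite !mxE. cas6 i; cas6 j; ent. all: ring. Qed.

Lemma JT {K : fieldType} : (Jmx : 'M[K]_6)^T = Jmx.
Proof. apply/matrixP => i j; rewrite !mxE. cas6 i; cas6 j. Qed.

Lemma xiX {K : fieldType} (v : 'cV[K]_6) : xi (Xmx v) = v.
Proof. apply/matrixP => i j; rewrite !mxE (ord1 j). cas6 i; ent. all: ring. Qed.

Lemma Xalt {K : fieldType} (v : 'cV[K]_6) : is_alt2 (Xmx v).
Proof. apply/matrixP => i j; rewrite !mxE. cas4 i; cas4 j; ent. all: ring. Qed.

Lemma Xlin {K : fieldType} (a : K) (u v : 'cV[K]_6) : Xmx (a *: u + v) = a *: Xmx u + Xmx v.
Proof. apply/matrixP => i j; rewrite !mxE. cas4 i; cas4 j; ent. all: ring. Qed.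

Lemma xilin {K : fieldType} (a : K) (T U : 'M[K]_4) : xi (a *: T + U) = a *: xi T + xi U.
Proof. apply/matrixP => i j; rewrite !mxE. cas6 i; ent. all: ring. Qed.

Lemma Xinj {K : fieldType} : injective (@Xmx K).
Proof. by move=> u v h; rewrite -(xiX u) h xiX. Qed.

Lemma Xxi {K : fieldType} (T : 'M[K]_4) : (2 : K) != 0 -> is_alt2 T -> Xmx (xi T) = T.
Proof. move=> h2; rewrite /is_alt2 => hT.
have ha : forall i j : 'I_4, T j i = - T i j.
  by move=> i j; have := congr1 (fun M : 'M[K]_4 => M i j) hT; rewrite !mxE => ->.
have hd : forall i : 'I_4, T i i = 0.
  move=> i; have := ha i i => /eqP; rewrite -subr_eq0 opprK -mulr2n -mulr_natl.
  by rewrite mulf_eq0 (negbTE h2) /= => /eqP.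
have han : forall i j, (i < 4)%N -> (j < 4)%N -> nf T j i = - nf T i j.
  by move=> i j hi hj; rewrite /nf ha.
have hdn : forall i, (i < 4)%N -> nf T i i = 0.
  by move=> i hi; rewrite /nf hd.
apply/matrixP => i j; rewrite !mxE.
cas4 i; cas4 j; ent.
all: try by rewrite hdn.
all: try by rewrite han // opprK.
Qed.

Lemma Xmap {K : fieldType} (d : K -> K) : d 0 = 0 -> (forall x, d (- x) = - d x) ->
  forall v, map_mx d (Xmx v) = Xmx (map_mx d v).
Proof. move=> d0 dN v; apply/matrixP => i j; rewrite !mxE.
cas4 i; cas4 j; rewrite /= /nf ?mxE ?dN //. Qed.

Lemma ximap {K : fieldType} (d : K -> K) : (forall x, d (- x) = - d x) ->
  forall T, map_mx d (xi T) = xi (map_mx d T).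
Proof. move=> dN T; apply/matrixP => i j; rewrite !mxE.
cas6 i; rewrite /= /nf ?mxE ?dN //. Qed.

Lemma pidJ {K : fieldType} : (pid_mx 3 : 'M[K]_6) *m Jmx = Jmx *m copid_mx 3.
Proof. apply/matrixP => i j; rewrite !mxE. cas6 i; cas6 j; ent. all: ring. Qed.

Lemma pid3J {K : fieldType} : (pid_mx 3 : 'M[K]_6) *m Jmx *m (pid_mx 3 : 'M[K]_6)^T = 0.
Proof. by rewrite pidJ tr_pid_mx -mulmxA mul_copid_mx_pid // mulmx0. Qed.


Definition sg6 (k : nat) : nat :=
  match k with 0 => 3 | 1 => 4 | 2 => 5 | 3 => 0 | 4 => 1 | _ => 2 end.

Lemma Jcond {K : fieldType} (A : 'M[K]_6) :
  A^T *m Jmx + Jmx *m A = 0 ->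
  forall i j, (i < 6)%N -> (j < 6)%N -> nf A (sg6 j) i + nf A (sg6 i) j = 0.
Proof.
move=> H i j hi hj; move: (congr1 (fun M : 'M[K]_6 => nf M i j) H).
case: i hi => [|[|[|[|[|[|i]]]]]] hi //; case: j hj => [|[|[|[|[|[|j]]]]]] hj //.
all: ent; move=> e; rewrite -e; ring.
Qed.

Definition Bf {K : fieldType} (A : 'M[K]_6) (i j : nat) : K :=
  let a := nf A in
  let b0 := (a 0%N 0%N + a 1%N 1%N + a 2%N 2%N) / 2 in
  match i, j with
  | 0,0 => b0 | 0,1 => a 1%N 5%N | 0,2 => - a 0%N 5%N | 0,_ => a 0%N 4%N
  | 1,0 => a 5%N 1%N | 1,1 => a 0%N 0%N - b0 | 1,2 => a 0%N 1%N | 1,_ => a 0%N 2%N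
  | 2,0 => a 3%N 2%N | 2,1 => a 1%N 0%N | 2,2 => a 1%N 1%N - b0 | 2,_ => a 1%N 2%N
  | _,0 => a 4%N 0%N | _,1 => a 2%N 0%N | _,2 => a 2%N 1%N | _,_ => a 2%N 2%N - b0
  end.
Definition Bof {K : fieldType} (A : 'M[K]_6) : 'M[K]_4 := \matrix_(i, j) Bf A i j.

Lemma eqN_from {K : fieldType} (x y : K) : x + y = 0 -> x = - y.
Proof. by move=> h; apply/eqP; rewrite -subr_eq0 opprK h. Qed.

Lemma eq0_from {K : fieldType} (x : K) : (2 : K) != 0 -> x + x = 0 -> x = 0.
Proof. move=> h2 /eqP; rewrite -mulr2n -mulr_natl mulf_eq0 (negbTE h2) /=.
by move/eqP. Qed.

Lemma Lsurj {K : fieldType} (A : 'M[K]_6) : (2 : K) != 0 ->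
  A^T *m Jmx + Jmx *m A = 0 -> A = Lmap (Bof A) /\ \tr (Bof A) = 0.
Proof.
move=> h2 H; have hc := Jcond H.
have r03 : nf A 0 3 = 0 by apply: eq0_from => //; exact: (hc 3 3 isT isT).
have r14 : nf A 1 4 = 0 by apply: eq0_from => //; exact: (hc 4 4 isT isT).
have r25 : nf A 2 5 = 0 by apply: eq0_from => //; exact: (hc 5 5 isT isT).
have r30 : nf A 3 0 = 0 by apply: eq0_from => //; exact: (hc 0 0 isT isT).
have r41 : nf A 4 1 = 0 by apply: eq0_from => //; exact: (hc 1 1 isT isT).
have r52 : nf A 5 2 = 0 by apply: eq0_from => //; exact: (hc 2 2 isT isT).
have r13 := eqN_from (hc 3 4 isT isT).
have r23 := eqN_from (hc 3 5 isT isT).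
have r24 := eqN_from (hc 4 5 isT isT).
have r31 := eqN_from (hc 1 0 isT isT).
have r33 := eqN_from (hc 3 0 isT isT).
have r34 := eqN_from (hc 4 0 isT isT).
have r35 := eqN_from (hc 5 0 isT isT).
have r42 := eqN_from (hc 2 1 isT isT).
have r43 := eqN_from (hc 3 1 isT isT).
have r44 := eqN_from (hc 4 1 isT isT).
have r45 := eqN_from (hc 5 1 isT isT).
have r50 := eqN_from (hc 0 2 isT isT).
have r53 := eqN_from (hc 3 2 isT isT).
have r54 := eqN_from (hc 4 2 isT isT).
have r55 := eqN_from (hc 5 2 isT isT).
simpl in r13, r23, r24, r31, r33, r34, r35, r42, r43, r44, r45, r50, r53, r54, r55.
split.
  apply/matrixP => i j; rewrite !mxE.
  cas6 i; cas6 j; ent.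
  all: rewrite ?r03 ?r14 ?r25 ?r30 ?r41 ?r52 ?r13 ?r23 ?r24 ?r31 ?r33 ?r34 ?r35 ?r42 ?r43 ?r44 ?r45 ?r50 ?r53 ?r54 ?r55.
  all: clear -h2; try ring; try (field; exact: h2).
rewrite /mxtrace; ent. clear -h2; field; exact: h2.
Qed.


Lemma det_zero_row (K : fieldType) n (A : 'M[K]_n) (i : 'I_n) :
  (forall j, A i j = 0) -> \det A = 0.
Proof. move=> h.
rewrite (@determinant_multilinear _ _ A A A i 0 0) ?mul0r ?addr0 //.
by apply/rowP => j; rewrite !mxE h !mul0r addr0.
Qed.

Lemma det_col1 (K : fieldType) n (w : 'cV[K]_n) (k : 'I_n) :
  \det (\matrix_(i, j) (if j == k then w i 0 else (1%:M : 'M[K]_n) i j)) = w k 0.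
Proof.
rewrite (expand_det_col _ k) (bigD1 k) //= big1 ?addr0.
  rewrite !mxE eqxx /cofactor.
  have -> : row' k (col' k (\matrix_(i, j) (if j == k then w i 0 else (1%:M : 'M[K]_n) i j))) = 1%:M.
    apply/matrixP => a b; rewrite !mxE eq_sym (negbTE (neq_lift k b)) ?mxE.
    by rewrite (inj_eq lift_inj).
  by rewrite det1 mulr1 -signr_odd oddD addbb expr0 mulr1.
move=> i hi; rewrite /cofactor.
case: (unliftP i k) => [a ha|ha]; last by rewrite ha eqxx in hi.
rewrite (@det_zero_row _ _ _ a) ?mulr0 ?mul0r //.
move=> b; rewrite !mxE -ha eq_sym (negbTE (neq_lift k b)) ?mxE.
by [].
Qed.


Lemma blockJ {K : fieldType} :
  (block_mx 0 1%:M 1%:M 0 : 'M[K]_(3 + 3)) = (Jmx : 'M[K]_6).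
Proof.
apply/matrixP => i j.
rewrite -(splitK i) -(splitK j); case: (split i) => i'; case: (split j) => j' /=;
  rewrite ?block_mxEul ?block_mxEur ?block_mxEdl ?block_mxEdr !mxE /=;
  case: i' => [[|[|[|?]]] ?] //; case: j' => [[|[|[|?]]] ?] //.
Qed.

Lemma entry_form {K : fieldType} m (Wb : 'M[K]_(m, 6)) (F : 'M[K]_6) i j :
  (Wb *m F *m Wb^T) i j = (row i Wb *m F *m (row j Wb)^T) 0 0.
Proof.
rewrite !mxE; apply: eq_bigr => k _; rewrite !mxE; congr (_ * _).
by apply: eq_bigr => l _; rewrite !mxE.
Qed.

Lemma witt_aux {K : fieldType} (h2 : (2 : K) != 0) (F : 'M[K]_6)
  (hs : F^T = F) (Fu : F \in unitmx) (Wb : 'M[K]_(3, 6)) :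
  row_free Wb -> Wb *m F *m Wb^T = 0 -> exists Q : 'M[K]_6, Q *m F *m Q^T = Jmx.
Proof.
move=> hfree hiso.
have Ffree : row_free F by rewrite row_free_unit.
have hC : row_full (Wb *m F)^T.
  rewrite /row_full mxrank_tr mxrankMfree //.
have [Y0 hY0] := row_fullP hC.
have e1 : Wb *m F *m Y0^T = 1%:M.
  by rewrite -[Wb *m F]trmxK -trmx_mul hY0 trmx1.
have e1' : Y0 *m F *m Wb^T = 1%:M.
  by apply: (can_inj (@trmxK _ _ _)); rewrite trmx1 !trmx_mul !trmxK hs mulmxA e1.
have [S hSd] : {S : 'M[K]_3 | S = Y0 *m F *m Y0^T} by exists (Y0 *m F *m Y0^T).
have hS : S^T = S by rewrite hSd !trmx_mul trmxK hs mulmxA.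
have [Z hZd] : {Z : 'M[K]_(3, 6) | Z = Y0 - (2^-1) *: (S *m Wb)} by eexists.
have e2 : Wb *m F *m Z^T = 1%:M.
  rewrite hZd linearB /= linearZ /= trmx_mul mulmxBr e1 -scalemxAr mulmxA hiso.
  by rewrite mul0mx scaler0 subr0.
have e3 : Z *m F *m Wb^T = 1%:M.
  by apply: (can_inj (@trmxK _ _ _)); rewrite trmx1 !trmx_mul !trmxK hs mulmxA e2.
have e4 : Z *m F *m Z^T = 0.
  have eZT : Z^T = Y0^T - (2^-1) *: (Wb^T *m S).
    by rewrite hZd linearB /= linearZ /= trmx_mul hS.
  have eS : S *m Wb *m F *m Y0^T = S
    by rewrite -(mulmxA (S *m Wb)) -(mulmxA S) (mulmxA Wb) e1 mulmx1.
  rewrite eZT mulmxBr -scalemxAr mulmxA e3 mul1mx.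
  rewrite {1}hZd mulmxBl mulmxBl -!scalemxAl eS -hSd.
  rewrite -[X in X - _ - _]scale1r -!scalerBl; apply/eqP; rewrite scaler_eq0; apply/orP; left.
  apply/eqP; field; exact: h2.
have hQ : (col_mx Wb Z) *m F *m (col_mx Wb Z)^T = block_mx 0 1%:M 1%:M 0 :> 'M[K]_(3 + 3).
  by rewrite tr_col_mx mul_col_mx mul_col_row hiso e2 e3 e4.
exists (col_mx Wb Z); rewrite -blockJ; exact: hQ.
Qed.


Lemma witt {K : fieldType} (h2 : (2 : K) != 0) (F : 'M[K]_6)
  (hs : F^T = F) (Fu : F \in unitmx) (W : 'M[K]_6) :
  \rank W = 3%N -> totally_isotropic F W -> exists Q : 'M[K]_6, Q *m F *m Q^T = Jmx.
Proof.
move=> hr hiso.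
have gen : forall r (Wb : 'M[K]_(r, 6)), r = 3%N -> row_free Wb ->
    (forall i j, (Wb *m F *m Wb^T) i j = 0) -> exists Q : 'M[K]_6, Q *m F *m Q^T = Jmx.
  move=> r Wb hr3; subst r => hf hz; apply: (witt_aux h2 hs Fu hf).
  by apply/matrixP => i j; rewrite hz mxE.
apply: (gen _ (row_base W) hr (row_base_free W)).
move=> i j; rewrite entry_form; apply: hiso.
  by apply: submx_trans (row_sub i _) _; rewrite eq_row_base.
by apply: submx_trans (row_sub j _) _; rewrite eq_row_base.
Qed.

Lemma Mebase (K : fieldType) n (B : 'M[K]_n) i j : (B *m ebase j) i 0 = B i j.
Proof. rewrite mxE (bigD1 j) //= big1 ?addr0.
  by rewrite !mxE !eqxx mulr1.
by move=> l hl; rewrite !mxE (negbTE hl) /= mulr0. Qed.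

Lemma dmxJ (K : fieldType) (d : K -> K) : derivation d -> dmx d (Jmx : 'M[K]_6) = 0.
Proof. move=> hd; apply/matrixP => i j; rewrite !mxE.
by case: (_ || _); rewrite ?(der1 hd) ?(der0 hd). Qed.

Lemma Xadd (K : fieldType) (u v : 'cV[K]_6) : Xmx (u + v) = Xmx u + Xmx v.
Proof. by have := Xlin 1 u v; rewrite !scale1r. Qed.

Lemma zmodAC (V : zmodType) (a b c e : V) : a - b + (c - e) = a + - (b + e) + c.
Proof. by rewrite opprD !addrA addrAC. Qed.

Lemma zmodAC2 (V : zmodType) (a b c : V) : a + b = c + a + (b - c).
Proof. by rewrite -addrA (addrCA c); congr (_ + _); rewrite addrC addrNK. Qed.

Lemma dir21 (K : fieldType) (d : K -> K) (hd : derivation d) (h2 : (2 : K) != 0)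
  (DM : 'cV[K]_6 -> 'cV[K]_6) (hDM : dmod_der d DM) (F : 'M[K]_6) :
  is_sym2 F -> tensor_der d DM F = 0 -> nondeg_form F ->
  forall W : 'M[K]_6, \rank W = 3%N -> totally_isotropic F W ->
  exists DN : 'cV[K]_4 -> 'cV[K]_4,
      dmod_der d DN /\ det_trivial d DN /\ iso_to_Lambda2 d DM DN.
Proof.
move=> hs hh hn W hr hiso.
have [A hAd] : {A | A = Amat DM} by eexists.
have hF : dmx d F = - (A *m F + F *m A^T).
  move: hh; rewrite (tensor_der_formula hd hDM) -hAd => /eqP.
  by rewrite -addrA addr_eq0 => /eqP.
have Fu : F \in unitmx.
  rewrite -row_free_unit; apply: inj_row_free => v hv; apply: hn => b.
  by rewrite /sform hv !mul0mx mxE.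
have [Q hQ] := witt h2 hs Fu hr hiso.
have [P hPd] : {P | P = Jmx *m Q} by eexists.
have [R hRd] : {R | R = F *m Q^T} by eexists.
have PR : P *m R = 1%:M by rewrite hPd hRd -mulmxA (mulmxA Q) hQ JJ.
have RP : R *m P = 1%:M := mulmx1C PR.
have [C hCd] : {C | C = dmx d Q - Q *m A} by eexists.
have key : C *m F *m Q^T + Q *m F *m C^T = 0.
  have h0 : dmx d (Q *m F *m Q^T) = 0 by rewrite hQ dmxJ.
  rewrite !(dmxM hd) dmxT hF in h0.
  rewrite hCd linearB /= trmx_mul -h0.
  rewrite ?(mulmxBl, mulmxBr, mulmxDl, mulmxDr, mulmxN, mulNmx) -!mulmxA.
  exact: zmodAC.
have [A' hA'd] : {A' : 'M[K]_6 | A' = - (Jmx *m C *m R)} by eexists.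
have hA' : A'^T *m Jmx + Jmx *m A' = 0.
  have e1 : A'^T *m Jmx = - (Q *m F *m C^T).
    rewrite hA'd linearN /= !trmx_mul hRd trmx_mul trmxK hs JT mulNmx.
    by rewrite -!mulmxA JJ mulmx1.
  have e2 : Jmx *m A' = - (C *m F *m Q^T).
    by rewrite hA'd mulmxN !mulmxA JJ mul1mx hRd mulmxA.
  by rewrite e1 e2 -opprD addrC key oppr0.
have [hL htr] := Lsurj h2 hA'.
set B := Bof A' in hL htr.
pose DN := fun v : 'cV[K]_4 => dmx d v + B *m v.
have hDN : dmod_der d DN.
  split.
    by move=> u v; rewrite /DN (dmxD hd) mulmxDr addrACA.
  by move=> a u; rewrite /DN (dmxZ hd) -scalemxAr scalerDr addrA.
have hAN : Amat DN = B.
  by apply/matrixP => i j; rewrite mxE /DN /ebase (dmx_delta hd) add0r Mebase.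
exists DN; split => //; split.
  exists 1; split; first exact: oner_neq0.
  rewrite /det_der (der1 hd) add0r mul1r.
  under eq_bigr do rewrite det_col1 -Amat_col hAN Mebase.
  by move: htr; rewrite /mxtrace.
exists (fun u => Xmx (P *m u)); split.
  by move=> a u v; rewrite mulmxDr -scalemxAr Xlin.
split.
  move=> u v /Xinj h.
  by rewrite -(mul1mx u) -(mul1mx v) -RP -!mulmxA h.
split; first by move=> u; exact: Xalt.
split.
  by move=> T hT; exists (R *m xi T); rewrite mulmxA PR mul1mx Xxi.
move=> u.
rewrite (tensor_der_formula hd hDN) hAN (dmod_formula hd hDM u) -hAd.
rewrite -addrA -XL -hL (Xmap (der0 hd) (derN hd)) -Xadd; congr Xmx.
have eA : A' *m P = - (Jmx *m C) by rewrite hA'd mulNmx -(mulmxA (Jmx *m C) R P) RP mulmx1.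
have eP : dmx d P = Jmx *m dmx d Q by rewrite hPd (dmxM hd) (dmxJ hd) mul0mx add0r.
rewrite (dmxM hd) eP mulmxA eA hCd mulmxBr opprB mulmxBl mulmxDr.
rewrite !mulmxA -hPd; exact: zmodAC2.
Qed.


Lemma der_zero (K : fieldType) : derivation (fun _ : K => 0).
Proof. by rewrite /derivation; split => x y; rewrite ?(addr0, mulr0, mul0r). Qed.

Lemma lin_mat (K : fieldType) n (f : 'cV[K]_n -> 'cV[K]_n) :
  (forall u v, f (u + v) = f u + f v) -> (forall (a : K) u, f (a *: u) = a *: f u) ->
  forall u, f u = Amat f *m u.
Proof.
move=> hA hZ u.
have hD : dmod_der (fun _ : K => 0) f.
  by split => // a v; rewrite hZ scale0r add0r.
rewrite (dmod_formula (der_zero K) hD u).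
have -> : map_mx (fun _ : K => (0 : K)) u = (0 : 'cV[K]_n) by apply/matrixP => i j; rewrite !mxE.
by rewrite add0r.
Qed.

Lemma mx_ext_col (K : fieldType) n (X Y : 'M[K]_n) :
  (forall j, X *m ebase j = Y *m ebase j) -> X = Y.
Proof. move=> h; apply/matrixP => i j; by rewrite -!(Mebase _ i j) h. Qed.

Lemma zmodAC3 (V : zmodType) (a b x y : V) : a + b + (- a + x + (- b + y)) = x + y.
Proof. by rewrite addrACA !addNKr. Qed.

Lemma LJ' (K : fieldType) (B : 'M[K]_4) :
  Lmap B *m Jmx + Jmx *m (Lmap B)^T = \tr B *: Jmx.
Proof.
have h := LJ B.
have : Jmx *m ((Lmap B)^T *m Jmx + Jmx *m Lmap B) *m Jmx = Jmx *m (\tr B *: Jmx) *m Jmx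
  by rewrite h.
rewrite mulmxDr mulmxDl !mulmxA JJ mul1mx -!mulmxA JJ mulmx1.
rewrite -scalemxAl JJ -scalemxAr mulmx1 => h'.
by rewrite addrC h'.
Qed.

Lemma Mebase' (K : fieldType) m n (B : 'M[K]_(m, n)) i j :
  (B *m (delta_mx j (0 : 'I_1) : 'cV[K]_n)) i 0 = B i j.
Proof. rewrite mxE (bigD1 j) //= big1 ?addr0.
  by rewrite !mxE !eqxx mulr1.
by move=> l hl; rewrite !mxE (negbTE hl) /= mulr0. Qed.

Lemma dir12 (K : fieldType) (d : K -> K) (hd : derivation d) (h2 : (2 : K) != 0)
  (DM : 'cV[K]_6 -> 'cV[K]_6) (hDM : dmod_der d DM)
  (DN : 'cV[K]_4 -> 'cV[K]_4) :
  dmod_der d DN -> det_trivial d DN -> iso_to_Lambda2 d DM DN ->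
  exists F : 'M[K]_6,
      is_sym2 F /\ tensor_der d DM F = 0 /\ nondeg_form F /\
      exists W : 'M[K]_6, \rank W = 3%N /\ totally_isotropic F W.
Proof.
move=> hDN [c [hc0 hcd]] [phi [hlin [hinj [halt [hsurj hcomm]]]]].
have [A hAd] : {A | A = Amat DM} by eexists.
have [B hBd] : {B | B = Amat DN} by eexists.
have hc : d c + c * \tr B = 0.
  move: hcd; rewrite /det_der /mxtrace hBd.
  by under eq_bigr do rewrite det_col1 -Amat_col Mebase.
have phi0 : phi 0 = 0.
  have := hlin 1 0 0; rewrite !scale1r addr0 => h.
  by apply: (addrI (phi 0)); rewrite addr0 -h.
have xi0 : xi (0 : 'M[K]_4) = 0.
  have := xilin 1 (0 : 'M[K]_4) 0; rewrite !scale1r addr0 => h.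
  by apply: (addrI (xi 0)); rewrite addr0 -h.
pose psi := fun u => xi (phi u).
have hpA : forall u v, psi (u + v) = psi u + psi v.
  by move=> u v; rewrite /psi -(scale1r u) hlin xilin !scale1r.
have hpZ : forall (a : K) u, psi (a *: u) = a *: psi u.
  by move=> a u; rewrite /psi -(addr0 (a *: u)) hlin phi0 xilin xi0 addr0.
have [Psi hPsid] : {Psi | Psi = Amat psi} by eexists.
have hpsi : forall u, psi u = Psi *m u by move=> u; rewrite hPsid; exact: lin_mat.
have hphi : forall u, phi u = Xmx (psi u) by move=> u; rewrite /psi Xxi.
have Pu : Psi \in unitmx.
  rewrite -unitmx_tr -row_free_unit; apply: inj_row_free => v hv.
  have h0 : Psi *m v^T = 0 by rewrite -[Psi]trmxK -trmx_mul hv trmx0.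
  have : phi v^T = phi 0 by rewrite phi0 hphi hpsi h0; apply/matrixP => i j; rewrite !mxE;
    case: i => [[|[|[|[|?]]]] ?] //; case: j => [[|[|[|[|?]]]] ?] //=; rewrite /nf !mxE ?oppr0.
  by move/hinj => h; rewrite -[v]trmxK h trmx0.
have hcomm' : forall u, psi (DM u) = dmx d (psi u) + Lmap B *m psi u.
  move=> u; rewrite /psi hcomm (tensor_der_formula hd hDN) -hBd.
  rewrite -/(psi u) hphi (Xmap (der0 hd) (derN hd)) -addrA -XL -Xadd xiX //.
have hPA : Psi *m A = dmx d Psi + Lmap B *m Psi.
  apply: mx_ext_col => j; rewrite /ebase.
  have := hcomm' (ebase j).
  rewrite (dmod_formula hd hDM) /ebase (dmx_delta hd) add0r -hAd !hpsi (dmxM hd) (dmx_delta hd).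
  by rewrite mulmx0 addr0 mulmxDl -!mulmxA.
have SP : invmx Psi *m Psi = 1%:M by rewrite mulVmx.
have PS : Psi *m invmx Psi = 1%:M by rewrite mulmxV.
have [S hSd] : {S | S = invmx Psi} by eexists.
rewrite -hSd in SP PS.
have hdS : dmx d S = - (S *m dmx d Psi *m S).
  have h0 : dmx d (S *m Psi) = 0.
    rewrite SP; apply/matrixP=> i j; rewrite !mxE.
    by case: eqP => _; rewrite ?mulr1n ?mulr0n ?(der1 hd) ?(der0 hd).
  rewrite (dmxM hd) in h0.
  have -> : dmx d S = dmx d S *m Psi *m S by rewrite -mulmxA PS mulmx1.
  have -> : dmx d S *m Psi = - (S *m dmx d Psi) by apply/eqP; rewrite -addr_eq0 h0.
  by rewrite mulNmx.
have hAS : A *m S = - dmx d S + S *m Lmap B.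
  have -> : A *m S = S *m (Psi *m A) *m S by rewrite !mulmxA SP mul1mx.
  rewrite hPA mulmxDr mulmxDl hdS opprK.
  by congr (_ + _); rewrite -mulmxA -mulmxA PS mulmx1.
have Ju : (Jmx : 'M[K]_6) \in unitmx by case: (mulmx1_unit (@JJ K)).
have [G hGd] : {G | G = S *m Jmx *m S^T} by eexists.
exists (c *: G); split.
  by rewrite /is_sym2 linearZ /= hGd !trmx_mul trmxK JT mulmxA.
split.
  rewrite (tensor_der_formula hd hDM) -hAd (dmxZ hd) -scalemxAr -scalemxAl.
  have key : dmx d G + (A *m G + G *m A^T) = \tr B *: G.
    have e3 : dmx d G = dmx d S *m Jmx *m S^T + S *m Jmx *m (dmx d S)^T.
      by rewrite hGd !(dmxM hd) (dmxJ hd) mulmx0 addr0 dmxT.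
    have e1 : A *m G = - (dmx d S *m Jmx *m S^T) + S *m (Lmap B *m Jmx) *m S^T.
      by rewrite hGd !mulmxA hAS !mulmxDl ?mulNmx ?mulmxA.
    have e2 : G *m A^T = - (S *m Jmx *m (dmx d S)^T) + S *m (Jmx *m (Lmap B)^T) *m S^T.
      have -> : G *m A^T = S *m Jmx *m (A *m S)^T by rewrite hGd trmx_mul !mulmxA.
      by rewrite hAS linearD /= linearN /= trmx_mul mulmxDr mulmxN ?mulmxA.
    rewrite e3 e1 e2 zmodAC3 -mulmxDl -mulmxDr LJ' -scalemxAr -scalemxAl hGd //.
  by rewrite -!addrA -!scalerDr key scalerA -scalerDl hc scale0r.
split.
  have Fu : c *: G \in unitmx.
    by rewrite unitmxZ ?unitfE // hGd !unitmx_mul unitmx_tr hSd unitmx_inv Pu Ju.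
  move=> a ha.
  have haF : a *m (c *: G) = 0.
    apply/rowP => j; have := ha (delta_mx 0 j).
    by rewrite /sform trmx_delta Mebase' !mxE => ->.
  by rewrite -(mulmx1 a) -(mulmxV Fu) mulmxA haF mul0mx.
have hPG : Psi *m G *m Psi^T = Jmx.
  by rewrite hGd !mulmxA PS mul1mx -mulmxA -trmx_mul PS trmx1 mulmx1.
have [Wm hWd] : {Wm : 'M[K]_6 | Wm = (pid_mx 3 : 'M[K]_6) *m Psi} by eexists.
have hWF : Wm *m (c *: G) *m Wm^T = 0.
  rewrite hWd trmx_mul -scalemxAr -scalemxAl !mulmxA.
  have -> : (pid_mx 3 : 'M[K]_6) *m Psi *m G *m Psi^T = pid_mx 3 *m (Psi *m G *m Psi^T)
    by rewrite !mulmxA.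
  by rewrite hPG pid3J scaler0.
exists Wm; split.
  by rewrite hWd mxrankMfree ?row_free_unit // rank_pid_mx.
move=> a b /submxP [x ->] /submxP [y ->]; rewrite /sform.
rewrite trmx_mul !mulmxA.
have -> : x *m Wm *m (c *: G) *m Wm^T = x *m (Wm *m (c *: G) *m Wm^T) by rewrite !mulmxA.
by rewrite hWF mulmx0 mul0mx mxE.
Qed.


Theorem theorem4p1 (K : fieldType) (d : K -> K)
    (hd : derivation d) (hchar : [pchar K] =i pred0)
    (DM : 'cV[K]_6 -> 'cV[K]_6) (hDM : dmod_der d DM) :
  (exists DN : 'cV[K]_4 -> 'cV[K]_4,
      dmod_der d DN /\ det_trivial d DN /\ iso_to_Lambda2 d DM DN)
  <->
  (exists F : 'M[K]_6,
      is_sym2 F /\ tensor_der d DM F = 0 /\ nondeg_form F /\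
      exists W : 'M[K]_6, \rank W = 3%N /\ totally_isotropic F W).
Proof.
have h2 : (2 : K) != 0.
  by move/(pcharf0P K): hchar => h; rewrite h.
split.
  move=> [DN [hDN [hdet hiso]]]; exact: (dir12 hd h2 hDM hDN hdet hiso).
move=> [F [hs [hh [hn [W [hr hiso]]]]]]; exact: (dir21 hd h2 hDM hs hh hn hr hiso).
Qed.
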